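(* Let $M$ be a real $4$-dimensional manifold with local coordinates $q^1,\dots,q^4$, and write $\phi_{\mu\nu}=\partial_{q^\mu}\partial_{q^\nu}\phi$. None of the following Monge–Ampère equations for a real function $\phi$ corresponds to the variational problem of a first-order Lagrangian function $L(q^\mu,\phi,\phi_\mu)$ (i.e. none of them is, up to multiplication by a non-vanishing function, the Euler–Lagrange equation of such an $L$): (1) first Plebański heavenly equation $\phi_{13}\phi_{24}-\phi_{14}\phi_{23}=1$; (2) second Plebański heavenly equation $\phi_{11}\phi_{22}-(\phi_{12})^2+\phi_{13}+\phi_{24}=0$; (3) Grant equation $\phi_{11}+\phi_{24}\phi_{13}-\phi_{23}\phi_{14}=0$; (4) Husain equation $\phi_{13}\phi_{24}-\phi_{14}\phi_{23}+\phi_{11}+\phi_{22}=0$.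
   Context: A first-order Lagrangian function is a smooth function $L(q^\mu,\phi,\phi_\mu)$ of the coordinates, the field and its first derivatives $\phi_\mu=\partial_{q^\mu}\phi$; its Euler–Lagrange equation is $\frac{\partial L}{\partial\phi}-\frac{\partial}{\partial q^\mu}\frac{\partial L}{\partial\phi_\mu}=0$. *)

(* Defs.v *)
From HB Require Import structures.
From mathcomp Require Import all_boot all_order all_algebra.
From mathcomp Require Import all_classical all_reals all_analysis.
Set Implicit Arguments. Unset Strict Implicit. Unset Printing Implicit Defensive.
Import Order.TTheory GRing.Theory Num.Theory.
Import numFieldNormedType.Exports.
Local Open Scope classical_set_scope.
Local Open Scope ring_scope.

Section Defs.
Variable R : realType.

(* Coordinates q = (q^1,..,q^4) are points of 'rV[R]_4 ; index mu : 'I_4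
   (mathematical index mu+1). *)
Definition coord (mu : 'I_4) : 'rV[R]_4 := delta_mx 0 mu.

Definition jet1 := ('rV[R]_4 * R * 'rV[R]_4)%type.
Definition jet2 := ('rV[R]_4 * R * 'rV[R]_4 * 'M[R]_4)%type.

Fixpoint iterD {V : normedModType R} (vs : seq V) (f : V -> R) : V -> R :=
  match vs with
  | [::] => f
  | v :: vs' => 'D_v (iterD vs' f)
  end.

Definition smooth_on {V : normedModType R} (D : set V) (f : V -> R) : Prop :=
  forall (vs : seq V) (x : V), D x ->
    (forall v : V, derivable (iterD vs f) x v) /\ {for x, continuous (iterD vs f)}.

Definition smooth {V : normedModType R} (f : V -> R) : Prop := smooth_on setT f.

Definition grad (phi : 'rV[R]_4 -> R) (q : 'rV[R]_4) : 'rV[R]_4 :=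
  \row_mu 'D_(coord mu) phi q.

Definition hess (phi : 'rV[R]_4 -> R) (q : 'rV[R]_4) : 'M[R]_4 :=
  \matrix_(mu, nu) 'D_(coord mu) ('D_(coord nu) phi) q.

Definition jet1_of (phi : 'rV[R]_4 -> R) (q : 'rV[R]_4) : jet1 :=
  (q, phi q, grad phi q).
Definition jet2_of (phi : 'rV[R]_4 -> R) (q : 'rV[R]_4) : jet2 :=
  (q, phi q, grad phi q, hess phi q).

Definition dL_dphi (L : jet1 -> R) (x : jet1) : R :=
  'D_((0 : 'rV[R]_4), (1 : R), (0 : 'rV[R]_4)) L x.
Definition dL_dphimu (L : jet1 -> R) (mu : 'I_4) (x : jet1) : R :=
  'D_((0 : 'rV[R]_4), (0 : R), coord mu) L x.

Definition euler_lagrange (L : jet1 -> R) (phi : 'rV[R]_4 -> R) (q : 'rV[R]_4) : R :=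
  dL_dphi L (jet1_of phi q)
  - \sum_(mu < 4) 'D_(coord mu) (fun q' => dL_dphimu L mu (jet1_of phi q')) q.

Definition variational_on (U : set 'rV[R]_4) (F : jet2 -> R) : Prop :=
  exists (L : jet1 -> R) (lam : jet2 -> R),
    smooth_on [set x : jet1 | U x.1.1] L /\
    (forall x : jet2, U x.1.1.1 -> lam x != 0) /\
    (forall phi : 'rV[R]_4 -> R, smooth phi ->
       forall q, U q -> euler_lagrange L phi q = lam (jet2_of phi q) * F (jet2_of phi q)).

(* The four Monge-Ampere equations, written as F = 0.
   Matrix index i stands for the paper's index i+1. *)
Definition hess_of (x : jet2) : 'M[R]_4 := x.2.

Definition plebanski1 (x : jet2) : R :=
  let H := hess_of x in H 0 2%:R * H 1 3%:R - H 0 3%:R * H 1 2%:R - 1.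
Definition plebanski2 (x : jet2) : R :=
  let H := hess_of x in H 0 0 * H 1 1 - (H 0 1) ^+ 2 + H 0 2%:R + H 1 3%:R.
Definition grant (x : jet2) : R :=
  let H := hess_of x in H 0 0 + H 1 3%:R * H 0 2%:R - H 1 2%:R * H 0 3%:R.
Definition husain (x : jet2) : R :=
  let H := hess_of x in H 0 2%:R * H 1 3%:R - H 0 3%:R * H 1 2%:R + H 0 0 + H 1 1.

End Defs.

(* Main.v *)
Require Import Defs.
From HB Require Import structures.
From mathcomp Require Import all_boot all_order all_algebra.
From mathcomp Require Import all_classical all_reals all_analysis.
From mathcomp Require Import ring lra.
Import Order.TTheory GRing.Theory Num.Theory.
Import numFieldNormedType.Exports.
Local Open Scope classical_set_scope.
Local Open Scope ring_scope.
Set Implicit Arguments.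
Section S.
Variable R : realType.
Local Notation cd := (@Defs.coord R).
Implicit Types (f g : 'rV[R]_4 -> R).

Inductive poly : ('rV[R]_4 -> R) -> Prop :=
| pcst c : poly (fun _ => c)
| pcoord i : poly (fun q => q 0 i)
| padd f g : poly f -> poly g -> poly (fun q => f q + g q)
| pmul f g : poly f -> poly g -> poly (fun q => f q * g q).

Lemma D_coord i (x v : 'rV[R]_4) : 'D_v (fun q : 'rV[R]_4 => q 0 i) x = v 0 i.
Proof.
rewrite /derive; apply: lim_near_cst => //.
near=> h.
have hN0 : h != 0 by near: h; exact: nbhs_dnbhs_neq.
rewrite /= !mxE addrK scalerA mulVf // scale1r //.
Unshelve. all: by end_near. Qed.

Lemma derivable_coord i (x v : 'rV[R]_4) : derivable (fun q : 'rV[R]_4 => q 0 i) x v.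
Proof. exact/diff_derivable/differentiable_coord. Qed.

Lemma poly_derivable f : poly f -> forall x v, derivable f x v.
Proof.
elim=> [c|i|f1 f2 _ H1 _ H2|f1 f2 _ H1 _ H2] x v.
- exact: derivable_cst.
- exact: derivable_coord.
- exact: (derivableD (H1 x v) (H2 x v)).
- exact: (derivableM (H1 x v) (H2 x v)).
Qed.

Lemma poly_cont f : poly f -> continuous f.
Proof.
elim=> [c|i|f1 f2 _ H1 _ H2|f1 f2 _ H1 _ H2] x.
- exact: cst_continuous.
- exact: coord_continuous.
- exact: (continuousD (H1 x) (H2 x)).
- exact: (continuousM (H1 x) (H2 x)).
Qed.

Lemma poly_D f v : poly f -> poly ('D_v f).
Proof.
move=> pf; elim: pf => [c|i|f1 f2 p1 H1 p2 H2|f1 f2 p1 H1 p2 H2].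
- have -> : 'D_v (fun _ : 'rV[R]_4 => c) = fun _ => 0.
    by apply: funext => x; exact: (derive_cst c x v).
  exact: pcst.
- have -> : 'D_v (fun q : 'rV[R]_4 => q 0 i) = fun _ => v 0 i.
    by apply: funext => x; exact: D_coord.
  exact: pcst.
- have -> : 'D_v (fun q => f1 q + f2 q) = fun x => 'D_v f1 x + 'D_v f2 x.
    apply: funext => x; have H := deriveD (poly_derivable p1 x v) (poly_derivable p2 x v); exact H.
  exact: padd.
- have -> : 'D_v (fun q => f1 q * f2 q) = fun x => f1 x * 'D_v f2 x + f2 x * 'D_v f1 x.
    apply: funext => x; have H := deriveM (poly_derivable p1 x v) (poly_derivable p2 x v); rewrite /= in H; exact H.
  by apply: padd; apply: pmul.
Qed.

Lemma poly_iterD f (vs : seq 'rV[R]_4) : poly f -> poly (Defs.iterD vs f).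
Proof. by move=> pf; elim: vs => [|v vs IH] //=; exact: poly_D. Qed.

Lemma poly_smooth f : poly f -> smooth f.
Proof.
move=> pf vs x _; have p := poly_iterD vs pf; split.
- by move=> v; exact: poly_derivable.
- exact: poly_cont.
Qed.

Lemma poly_sum n (F : 'I_n -> 'rV[R]_4 -> R) : (forall i, poly (F i)) ->
  poly (fun q => \sum_(i < n) F i q).
Proof.
elim: n F => [|n IH] F HF.
  have -> : (fun q => \sum_(i < 0) F i q) = fun _ => 0.
    by apply: funext => q; rewrite big_ord0.
  exact: pcst.
have -> : (fun q => \sum_(i < n.+1) F i q) =
   fun q => \sum_(i < n) F (widen_ord (leqnSn n) i) q + F ord_max q.
  by apply: funext => q; rewrite big_ord_recr.
apply: padd; last exact: HF.
by apply: IH.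
Qed.


Lemma D_sum n (F : 'I_n -> 'rV[R]_4 -> R) (x v : 'rV[R]_4) :
  (forall i, poly (F i)) ->
  'D_v (fun q => \sum_(i < n) F i q) x = \sum_(i < n) 'D_v (F i) x.
Proof.
move=> HF; rewrite -(derive_sum (h := F)) //; first by rewrite fct_sumE.
by move=> i; apply: poly_derivable.
Qed.

Lemma sum_delta (F : 'I_4 -> R) (nu : 'I_4) :
  \sum_(j < 4) F j * (nu == j)%:R = F nu.
Proof.
rewrite (bigD1 nu) //= eqxx mulr1 big1 ?addr0 // => j /negbTE.
by rewrite eq_sym => ->; rewrite mulr0.
Qed.

Lemma sum_delta2 (F : 'I_4 -> 'I_4 -> R) (nu : 'I_4) :
  \sum_(i < 4) \sum_(j < 4) F i j * (nu == i)%:R = \sum_(j < 4) F nu j.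
Proof.
rewrite exchange_big /=; apply: eq_bigr => j _; exact: (sum_delta (fun i => F i j)).
Qed.

Lemma coordE (mu : 'I_4) j : cd mu 0 j = (mu == j)%:R :> R.
Proof. unfold Defs.coord. by rewrite mxE eqxx eq_sym. Qed.

Variable q0 : 'rV[R]_4.
Definition yy (i : 'I_4) (q : 'rV[R]_4) : R := q 0 i - q0 0 i.
Definition phiN (N : 'M[R]_4) (q : 'rV[R]_4) : R :=
  \sum_(i < 4) \sum_(j < 4) N i j * (yy i q * yy j q).
Definition gN (N : 'M[R]_4) (nu : 'I_4) (q : 'rV[R]_4) : R :=
  \sum_(i < 4) (N i nu + N nu i) * yy i q.

Lemma poly_yy i : poly (yy i).
Proof. by apply: padd; [exact: pcoord | exact: pcst]. Qed.

Lemma poly_phiN N : poly (phiN N).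
Proof.
apply: poly_sum => i; apply: poly_sum => j.
by apply: pmul; [exact: pcst | apply: pmul; exact: poly_yy].
Qed.

Lemma poly_gN N nu : poly (gN N nu).
Proof. by apply: poly_sum => i; apply: pmul; [exact: pcst | exact: poly_yy]. Qed.

Lemma D_yy i x v : 'D_v (yy i) x = v 0 i.
Proof.
rewrite /yy. have H := deriveB (derivable_coord i x v) (derivable_cst (q0 0 i) x v).
rewrite /= in H. rewrite H D_coord. have -> : 'D_v (cst (q0 0 i)) x = 0 by exact: derive_cst.
by rewrite subr0.
Qed.

Lemma D_phiN N x v : 'D_v (phiN N) x =
  \sum_(i < 4) \sum_(j < 4) N i j * (yy i x * v 0 j + yy j x * v 0 i).
Proof.
rewrite /phiN D_sum; last first.
  move=> i; apply: poly_sum => j.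
  by apply: pmul; [exact: pcst | apply: pmul; exact: poly_yy].
apply: eq_bigr => i _; rewrite D_sum; last first.
  by move=> j; apply: pmul; [exact: pcst | apply: pmul; exact: poly_yy].
apply: eq_bigr => j _.
have H := deriveM (derivable_cst (N i j) x v)
   (derivableM (poly_derivable (poly_yy i) x v) (poly_derivable (poly_yy j) x v)).
rewrite /= in H. rewrite H.
have H2 := deriveM (poly_derivable (poly_yy i) x v) (poly_derivable (poly_yy j) x v).
rewrite /= in H2. rewrite H2 !D_yy.
have -> : 'D_v (cst (N i j)) x = 0 by exact: derive_cst.
by rewrite /cst /= scaler0 addr0.
Qed.


Lemma D_lin (c : 'I_4 -> R) x v :
  'D_v (fun q => \sum_(i < 4) c i * yy i q) x = \sum_(i < 4) c i * v 0 i.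
Proof.
rewrite D_sum; last by move=> i; apply: pmul; [exact: pcst|exact: poly_yy].
apply: eq_bigr => i _.
have H := deriveM (derivable_cst (c i) x v) (poly_derivable (poly_yy i) x v).
rewrite /= in H. rewrite H D_yy.
have -> : 'D_v (cst (c i)) x = 0 by exact: derive_cst.
by rewrite scaler0 addr0.
Qed.

Lemma D_coord_phiN N nu x : 'D_(cd nu) (phiN N) x = gN N nu x.
Proof.
rewrite D_phiN /gN.
transitivity (\sum_(i < 4) \sum_(j < 4) (N i j * yy i x * (nu == j)%:R + N i j * yy j x * (nu == i)%:R)).
  by apply: eq_bigr => i _; apply: eq_bigr => j _; rewrite !coordE; ring.
under eq_bigr => i _ do rewrite big_split /=.
rewrite big_split /= sum_delta2.
under eq_bigr => i _ do rewrite sum_delta.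
rewrite -big_split /=.
by apply: eq_bigr => i _; rewrite mulrDl.
Qed.

Lemma D_coord_gN N nu mu x : 'D_(cd mu) (gN N nu) x = N mu nu + N nu mu.
Proof.
rewrite /gN D_lin.
under eq_bigr => i _ do rewrite coordE.
by rewrite sum_delta.
Qed.

Lemma grad_phiN N q : grad (phiN N) q = \row_nu gN N nu q.
Proof. by apply/rowP => nu; rewrite !mxE D_coord_phiN. Qed.

Lemma hess_phiN N q : hess (phiN N) q = N + N^T.
Proof.
apply/matrixP => mu nu; rewrite !mxE.
have -> : 'D_(cd nu) (phiN N) = gN N nu by apply: funext => y; exact: D_coord_phiN.
by rewrite D_coord_gN.
Qed.

Implicit Types (N : 'M[R]_4) (mu nu : 'I_4) (h : R).

Lemma yy_line mu h i : yy i (h *: cd mu + q0) = h * (mu == i)%:R.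
Proof. by rewrite /yy !mxE addrK eqxx /= eq_sym. Qed.

Lemma yy_q0 i : yy i q0 = 0.
Proof. by rewrite /yy subrr. Qed.

Lemma phiN_line N mu h : N mu mu = 0 -> phiN N (h *: cd mu + q0) = 0.
Proof.
move=> Hd; rewrite /phiN.
transitivity (\sum_(i < 4) \sum_(j < 4) (N i j * h * h * (mu == j)%:R) * (mu == i)%:R).
  by apply: eq_bigr => i _; apply: eq_bigr => j _; rewrite !yy_line; ring.
rewrite sum_delta2 sum_delta Hd; ring.
Qed.

Lemma phiN_q0 N : phiN N q0 = 0.
Proof. by rewrite /phiN big1 // => i _; rewrite big1 // => j _; rewrite !yy_q0 mulr0 mulr0. Qed.

Lemma gN_line N nu mu h : gN N nu (h *: cd mu + q0) = h * (N mu nu + N nu mu).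
Proof.
rewrite /gN.
transitivity (\sum_(i < 4) ((N i nu + N nu i) * h) * (mu == i)%:R).
  by apply: eq_bigr => i _; rewrite yy_line; ring.
by rewrite sum_delta; ring.
Qed.

Lemma gN_q0 N nu : gN N nu q0 = 0.
Proof. by rewrite /gN big1 // => i _; rewrite yy_q0 mulr0. Qed.

Definition x0 : jet1 R := (q0, 0, 0).
Definition wN (N : 'M[R]_4) (mu : 'I_4) : jet1 R := (cd mu, 0, \row_nu (N mu nu + N nu mu)).

Lemma jet_q0 N : jet1_of (phiN N) q0 = x0.
Proof.
rewrite /jet1_of /x0 phiN_q0 grad_phiN; congr (_, _, _).
by apply/rowP => nu; rewrite !mxE gN_q0.
Qed.

Lemma jet_line N mu h : N mu mu = 0 ->
  jet1_of (phiN N) (h *: cd mu + q0) = h *: wN N mu + x0.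
Proof.
move=> Hd; rewrite /jet1_of /x0 /wN phiN_line // grad_phiN.
congr (_, _, _).
- by rewrite /= ?scaler0 ?mulr0 addr0.
- by apply/rowP => nu; rewrite /= !mxE gN_line addr0.
Qed.

Lemma D_comp_line N mu (G : jet1 R -> R) : N mu mu = 0 ->
  'D_(cd mu) (fun q => G (jet1_of (phiN N) q)) q0 = 'D_(wN N mu) G x0.
Proof.
move=> Hd; rewrite /derive.
rewrite (_ : (fun h : R => h^-1 *: (((fun q => G (jet1_of (phiN N) q)) \o shift q0) (h *: cd mu) - G (jet1_of (phiN N) q0))) = (fun h => h^-1 *: ((G \o shift x0) (h *: wN N mu) - G x0))) //.
by apply: funext => h /=; rewrite jet_line // jet_q0.
Qed.
End S.
Section A.
Variable R : realType.

Lemma MVT_sym (phi df : R -> R) (h : R) :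
  (forall t : R, `|t| <= `|h| -> is_derive t (1 : R) phi (df t)) ->
  exists c, `|c| <= `|h| /\ phi h - phi 0 = df c * h.
Proof.
move=> Hd.
have [hlt|hgt|->] := ltgtP h 0.
- have le : h <= 0 by exact: ltW.
  have [c cI E] : exists2 c, c \in `[h, 0]%R & phi 0 - phi h = df c * (0 - h).
    apply: MVT_segment => //.
      move=> t tI; apply: Hd; rewrite in_itv /= in tI; case/andP: tI => t1 t2.
      by rewrite ltr0_norm // ltr0_norm ?lerN2 //; lra.
    apply: derivable_within_continuous => t tI; apply: (@ex_derive _ _ _ _ _ _ (df t)).
    apply: Hd; rewrite in_itv /= in tI; case/andP: tI => t1 t2.
    rewrite (ltr0_norm hlt) ler_norml; apply/andP; split; lra.
  exists c; split.
    rewrite in_itv /= in cI; case/andP: cI => t1 t2.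
    rewrite (ltr0_norm hlt) ler_norml; apply/andP; split; lra.
  have -> : phi h - phi 0 = - (phi 0 - phi h) by ring.
  by rewrite E; ring.
- have le : 0 <= h by exact: ltW.
  have [c cI E] : exists2 c, c \in `[0, h]%R & phi h - phi 0 = df c * (h - 0).
    apply: MVT_segment => //.
      move=> t tI; apply: Hd; rewrite in_itv /= in tI; case/andP: tI => t1 t2.
      rewrite (gtr0_norm hgt) ler_norml; apply/andP; split; lra.
    apply: derivable_within_continuous => t tI; apply: (@ex_derive _ _ _ _ _ _ (df t)).
    apply: Hd; rewrite in_itv /= in tI; case/andP: tI => t1 t2.
    rewrite (gtr0_norm hgt) ler_norml; apply/andP; split; lra.
  exists c; split.
    rewrite in_itv /= in cI; case/andP: cI => t1 t2.
    rewrite (gtr0_norm hgt) ler_norml; apply/andP; split; lra.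
  by rewrite E subr0.
- by exists 0; split; [rewrite normr0 | rewrite subrr mulr0].
Qed.


Lemma line_deriv (V : normedModType R) (G : V -> R) (b z : V) (s : R) :
  derivable G (s *: b + z) b ->
  is_derive s (1 : R) (fun t : R => G (t *: b + z)) ('D_b G (s *: b + z)).
Proof.
move=> Hd.
have E : (fun h : R => h^-1 *: (((fun t : R => G (t *: b + z)) \o shift s) (h *: (1 : R)) - G (s *: b + z)))
  = (fun h : R => h^-1 *: ((G \o shift (s *: b + z)) (h *: b) - G (s *: b + z))).
  apply: funext => h /=.
  by rewrite [h *: 1]mulr1 scalerDl addrA.
split; first by rewrite /derivable E.
by rewrite /derive E.
Qed.

Lemma add_dir (V : normedModType R) (G : V -> R) (x a b : V) :
  (\forall y \near x, derivable G y b) -> {for x, continuous ('D_b G)} ->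
  derivable G x a ->
  'D_(a + b) G x = 'D_a G x + 'D_b G x.
Proof.
move=> Hnb Hc Ha.
set qa := fun h : R => h^-1 *: ((G \o shift x) (h *: a) - G x).
set r := fun h : R => h^-1 *: (G (h *: (a + b) + x) - G (h *: a + x)).
have E : (fun h : R => h^-1 *: ((G \o shift x) (h *: (a + b)) - G x)) = qa \+ r.
  apply: funext => h; rewrite /qa /r /=.
  rewrite -scalerDr; congr (_ *: _); ring.
have Hqa : qa @ 0^' --> 'D_a G x by exact: Ha.
have Hr : r @ 0^' --> 'D_b G x.
  apply/cvgrPdist_lt => e e0.
  have Hce : \forall y \near x, `|'D_b G x - 'D_b G y| < e.
    by move/cvgrPdist_lt: Hc => /(_ e e0).
  have HI : \forall y \near x, derivable G y b /\ `|'D_b G x - 'D_b G y| < e.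
    by near=> y; split; [near: y; exact: Hnb | near: y; exact: Hce].
  have [d /= d0 Hd] := (iffLR (nbhs_normP _ _) HI).
  set k := `|a| + `|b| + 1.
  have k0 : 0 < k by rewrite /k; have := normr_ge0 a; have := normr_ge0 b; lra.
  near=> h.
  have hN0 : h != 0 by near: h; exact: nbhs_dnbhs_neq.
  have hs : `|h| < d / k.
    near: h; apply: dnbhs0_lt; exact: divr_gt0.
  have Pt : forall t : R, `|t| <= `|h| -> derivable G (t *: b + (h *: a + x)) b /\
      `|'D_b G x - 'D_b G (t *: b + (h *: a + x))| < e.
    move=> t ht; apply: Hd => /=.
    have -> : x - (t *: b + (h *: a + x)) = - (t *: b + h *: a).
      by rewrite addrA opprD addrCA subrr addr0.
    rewrite normrN; apply: (le_lt_trans (ler_normD _ _)); rewrite !normrZ.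
    have hk : `|h| * k < d by rewrite -ltr_pdivlMr.
    have := normr_ge0 a; have := normr_ge0 b; have := normr_ge0 h; have := normr_ge0 t.
    move: hk; rewrite /k => hk *.
    nra.
  have [c [hc Ec]] := @MVT_sym (fun t => G (t *: b + (h *: a + x)))
      (fun t => 'D_b G (t *: b + (h *: a + x))) h
      (fun t ht => @line_deriv _ _ _ _ _ (proj1 (Pt t ht))).
  have -> : r h = 'D_b G (c *: b + (h *: a + x)).
    rewrite /r.
    have -> : G (h *: (a + b) + x) - G (h *: a + x) =
      G (h *: b + (h *: a + x)) - G (0 *: b + (h *: a + x)).
      by rewrite scale0r add0r scalerDr addrA [h *: b + _]addrC.
    by rewrite Ec [_ *: _]mulrC -mulrA mulfV // mulr1.
  exact: (proj2 (Pt c hc)).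
have Hsum := cvgD Hqa Hr.
rewrite /derive E; apply: cvg_lim => //; exact: Hsum.
Unshelve. all: by end_near. Qed.

End A.

Section Main.
Variable R : realType.
Local Notation cd := (@Defs.coord R).
Variables (U : set 'rV[R]_4) (q0 : 'rV[R]_4) (L : jet1 R -> R).
Hypothesis oU : open U.
Hypothesis Uq0 : U q0.
Hypothesis HL : smooth_on [set x : jet1 R | U x.1.1] L.
Local Notation ph N := (phiN R q0 N).
Local Notation X0 := (x0 R q0).

Definition EL N := euler_lagrange L (ph N) q0.
Definition Gm mu := dL_dphimu L mu.
Definition rowN (N : 'M[R]_4) (mu : 'I_4) : 'rV[R]_4 := \row_nu (N mu nu + N nu mu).

Lemma near_U : \forall y \near X0, U y.1.1.
Proof.
have Uq : nbhs q0 U by apply: open_nbhs_nbhs; split.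
have c1 : (fun y : jet1 R => y.1.1) @ X0 --> q0.
  apply: (cvg_comp _ _ cvg_fst cvg_fst).
exact: c1.
Qed.

Lemma Gm_derivable mu y v : U y.1.1 -> derivable (Gm mu) y v.
Proof. move=> Uy; exact: ((HL [:: ((0 : 'rV[R]_4), (0 : R), cd mu)] Uy).1 v). Qed.

Lemma Gm_near mu v : \forall y \near X0, derivable (Gm mu) y v.
Proof. by apply: filterS near_U => y Uy; exact: Gm_derivable. Qed.

Lemma Gm_cont mu v : {for X0, continuous ('D_v (Gm mu))}.
Proof. exact: ((HL [:: v; ((0 : 'rV[R]_4), (0 : R), cd mu)] (Uq0 : [set x : jet1 R | U x.1.1] X0)).2). Qed.

Lemma D_add mu a b : 'D_(a + b) (Gm mu) X0 = 'D_a (Gm mu) X0 + 'D_b (Gm mu) X0.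
Proof. apply: add_dir; [exact: Gm_near | exact: Gm_cont | exact: Gm_derivable]. Qed.

Lemma D_split N mu : 'D_(wN R N mu) (Gm mu) X0 =
  'D_((cd mu, (0:R), (0:'rV[R]_4)) : jet1 R) (Gm mu) X0 +
  'D_(((0:'rV[R]_4), (0:R), rowN N mu) : jet1 R) (Gm mu) X0.
Proof.
rewrite -D_add; congr ('D_(_) _ _).
by rewrite /wN /rowN; congr (_, _, _) => /=; rewrite ?addr0 ?add0r.
Qed.

Lemma D_row N1 N2 mu :
  'D_(((0:'rV[R]_4), (0:R), rowN (N1 + N2) mu) : jet1 R) (Gm mu) X0 =
  'D_(((0:'rV[R]_4), (0:R), rowN N1 mu) : jet1 R) (Gm mu) X0 +
  'D_(((0:'rV[R]_4), (0:R), rowN N2 mu) : jet1 R) (Gm mu) X0.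
Proof.
rewrite -D_add; congr ('D_(_) _ _).
congr (_, _, _) => /=; rewrite ?addr0 //.
by apply/rowP => nu; rewrite !mxE; ring.
Qed.

Lemma D_row0 mu :
  'D_(((0:'rV[R]_4), (0:R), rowN 0 mu) : jet1 R) (Gm mu) X0 = 0.
Proof.
have -> : (((0:'rV[R]_4), (0:R), rowN 0 mu) : jet1 R) = 0.
  by congr (_, _, _); apply/rowP => nu; rewrite !mxE addr0.
exact: derive0.
Qed.

Lemma EL_eq (N : 'M[R]_4) : (forall i, N i i = 0) ->
  EL N = dL_dphi L X0 - \sum_(mu < 4)
    ('D_((cd mu, (0:R), (0:'rV[R]_4)) : jet1 R) (Gm mu) X0 +
     'D_(((0:'rV[R]_4), (0:R), rowN N mu) : jet1 R) (Gm mu) X0).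
Proof.
move=> Hd; rewrite /EL /euler_lagrange jet_q0; congr (_ - _).
apply: eq_bigr => mu _.
by rewrite (D_comp_line _ _ _ _ (Hd mu)) D_split.
Qed.

Lemma sum_aux (K : R) (a b1 b2 b12 b0 : 'I_4 -> R) :
  (forall mu, b12 mu = b1 mu + b2 mu) -> (forall mu, b0 mu = 0) ->
  (K - \sum_(mu < 4) (a mu + b1 mu)) + (K - \sum_(mu < 4) (a mu + b2 mu)) =
  (K - \sum_(mu < 4) (a mu + b12 mu)) + (K - \sum_(mu < 4) (a mu + b0 mu)).
Proof.
move=> E12 E0.
have -> : \sum_(mu < 4) (a mu + b12 mu) = \sum_(mu < 4) a mu + (\sum_(mu < 4) b1 mu + \sum_(mu < 4) b2 mu).
  rewrite -big_split -big_split /=; apply: eq_bigr => mu _; by rewrite E12.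
have -> : \sum_(mu < 4) (a mu + b0 mu) = \sum_(mu < 4) a mu.
  by apply: eq_bigr => mu _; rewrite E0 addr0.
rewrite !big_split /=; ring.
Qed.

Lemma EL_add (N1 N2 : 'M[R]_4) : (forall i, N1 i i = 0) -> (forall i, N2 i i = 0) ->
  EL N1 + EL N2 = EL (N1 + N2) + EL 0.
Proof.
move=> H1 H2.
have H12 : forall i, (N1 + N2) i i = 0 by move=> i; rewrite mxE H1 H2 addr0.
have H0 : forall i, (0 : 'M[R]_4) i i = 0 by move=> i; rewrite mxE.
rewrite (@EL_eq N1 H1) (@EL_eq N2 H2) (@EL_eq _ H12) (@EL_eq _ H0).
apply: sum_aux => mu; [exact: D_row | exact: D_row0].
Qed.


End Main.

Definition Emx (R : realType) (a b : nat) : 'M[R]_4 :=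
  \matrix_(i, j) ((i == a :> nat) && (j == b :> nat))%:R.

Lemma Emx_diag (R : realType) (a b : nat) : a != b -> forall i, Emx R a b i i = 0.
Proof.
move=> hab i; rewrite mxE; case E: (i == a :> nat) => //=.
by move/eqP: E => ->; rewrite (negbTE hab).
Qed.

Lemma jet2_hess (R : realType) (q0 : 'rV[R]_4) N :
  hess_of (jet2_of (phiN R q0 N) q0) = N + N^T.
Proof. by rewrite /hess_of /jet2_of /= hess_phiN. Qed.

Lemma key (R : realType) (U : set 'rV[R]_4) (F : jet2 R -> R) (N1 N2 : 'M[R]_4) :
  open U -> U !=set0 -> (forall i, N1 i i = 0) -> (forall i, N2 i i = 0) ->
  (forall (q0 : 'rV[R]_4) (l1 l2 l3 l4 : R), l1 != 0 -> l2 != 0 -> l3 != 0 -> l4 != 0 ->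
     l1 * F (jet2_of (phiN R q0 N1) q0) + l2 * F (jet2_of (phiN R q0 N2) q0) <>
     l3 * F (jet2_of (phiN R q0 (N1 + N2)) q0) + l4 * F (jet2_of (phiN R q0 0) q0)) ->
  ~ variational_on U F.
Proof.
move=> oU [q0 Uq0] H1 H2 Hne [L [lam [HL [Hlam HEL]]]].
have E := @EL_add R U q0 L oU Uq0 HL N1 N2 H1 H2.
rewrite /EL !(HEL _ (poly_smooth (poly_phiN R q0 _)) q0 Uq0) in E.
move: E; apply: Hne; exact: Hlam.
Qed.


Lemma diagD (R : realType) (N M : 'M[R]_4) : (forall i, N i i = 0) -> (forall i, M i i = 0) ->
  forall i, (N + M) i i = 0.
Proof. by move=> HN HM i; rewrite mxE HN HM addr0. Qed.
Lemma diagN (R : realType) (N : 'M[R]_4) : (forall i, N i i = 0) -> forall i, (- N) i i = 0.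
Proof. by move=> HN i; rewrite mxE HN oppr0. Qed.


Lemma key2 (R : realType) (U : set 'rV[R]_4) (F : jet2 R -> R) (Fh : 'M[R]_4 -> R)
  (N1 N2 : 'M[R]_4) :
  open U -> U !=set0 -> (forall i, N1 i i = 0) -> (forall i, N2 i i = 0) ->
  (forall x, F x = Fh (hess_of x)) ->
  Fh (N1 + N1^T) = 0 -> Fh (N2 + N2^T) = 0 ->
  (Fh ((N1 + N2) + (N1 + N2)^T) = 0 /\ Fh (0 + 0^T) != 0 \/
   Fh ((N1 + N2) + (N1 + N2)^T) != 0 /\ Fh (0 + 0^T) = 0) ->
  ~ variational_on U F.
Proof.
move=> oU U0 H1 H2 HF e1 e2 Hc. apply: (@key R U F N1 N2 oU U0 H1 H2) => q0 l1 l2 l3 l4 h1 h2 h3 h4.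
have E1 : F (jet2_of (phiN R q0 N1) q0) = 0.
  rewrite HF jet2_hess e1; reflexivity.
have E2 : F (jet2_of (phiN R q0 N2) q0) = 0.
  rewrite HF jet2_hess e2; reflexivity.
have E3 : F (jet2_of (phiN R q0 (N1 + N2)) q0) = Fh ((N1 + N2) + (N1 + N2)^T).
  rewrite HF jet2_hess; reflexivity.
have E4 : F (jet2_of (phiN R q0 0) q0) = Fh (0 + 0^T).
  rewrite HF jet2_hess; reflexivity.
move=> E.
move: E E1 E2 E3 E4.
generalize (F (jet2_of (phiN R q0 N1) q0)) => a.
generalize (F (jet2_of (phiN R q0 N2) q0)) => b.
generalize (F (jet2_of (phiN R q0 (N1 + N2)) q0)) => c.
generalize (F (jet2_of (phiN R q0 0) q0)) => d.
move=> E Ea Eb Ec Ed; subst a b c d.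
move: Hc E; generalize (Fh ((N1 + N2) + (N1 + N2)^T)) (Fh (0 + 0^T)) => c d Hc E.
move: E; rewrite !mulr0 add0r.
case: Hc => [[-> h]|[h ->]]; rewrite mulr0 ?add0r ?addr0 => E.
- move/eqP: h4; apply; apply: (mulIf h); rewrite mul0r; symmetry; exact E.
- move/eqP: h3; apply; apply: (mulIf h); rewrite mul0r; symmetry; exact E.
Qed.



Lemma diagB (R : realType) (N M : 'M[R]_4) : (forall i, N i i = 0) -> (forall i, M i i = 0) ->
  forall i, (N - M) i i = 0.
Proof. by move=> HN HM i; rewrite !mxE HN HM subr0. Qed.

Section Vals.
Variable R : realType.
Definition pleb1h (H : 'M[R]_4) : R := H 0 2%:R * H 1 3%:R - H 0 3%:R * H 1 2%:R - 1.
Definition pleb2h (H : 'M[R]_4) : R := H 0 0 * H 1 1 - (H 0 1) ^+ 2 + H 0 2%:R + H 1 3%:R.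
Definition granth (H : 'M[R]_4) : R := H 0 0 + H 1 3%:R * H 0 2%:R - H 1 2%:R * H 0 3%:R.
Definition husainh (H : 'M[R]_4) : R := H 0 2%:R * H 1 3%:R - H 0 3%:R * H 1 2%:R + H 0 0 + H 1 1.

Definition P1a : 'M[R]_4 := Emx R 0 2 + Emx R 1 3.
Definition P1b : 'M[R]_4 := Emx R 0 3 - Emx R 1 3 - Emx R 1 2.
Definition P2a : 'M[R]_4 := Emx R 0 1 + Emx R 0 2.
Definition P2b : 'M[R]_4 := Emx R 0 2 - Emx R 0 1.
Definition Ga : 'M[R]_4 := Emx R 1 3.
Definition Gb : 'M[R]_4 := Emx R 0 2.

Lemma v11 : pleb1h (P1a + P1a^T) = 0. Proof. rewrite /pleb1h /P1a !mxE /=; ring. Qed.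
Lemma v12 : pleb1h (P1b + P1b^T) = 0. Proof. rewrite /pleb1h /P1b !mxE /=; ring. Qed.
Lemma v13 : pleb1h ((P1a + P1b) + (P1a + P1b)^T) = 0. Proof. rewrite /pleb1h /P1a /P1b !mxE /=; ring. Qed.
Lemma v14 : pleb1h (0 + 0^T) = -1. Proof. rewrite /pleb1h !mxE /=; ring. Qed.
Lemma v21 : pleb2h (P2a + P2a^T) = 0. Proof. rewrite /pleb2h /P2a !mxE /=; ring. Qed.
Lemma v22 : pleb2h (P2b + P2b^T) = 0. Proof. rewrite /pleb2h /P2b !mxE /=; ring. Qed.
Lemma v23 : pleb2h ((P2a + P2b) + (P2a + P2b)^T) = 2. Proof. rewrite /pleb2h /P2a /P2b !mxE /=; ring. Qed.
Lemma v24 : pleb2h (0 + 0^T) = 0. Proof. rewrite /pleb2h !mxE /=; ring. Qed.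
Lemma v31 : granth (Ga + Ga^T) = 0. Proof. rewrite /granth /Ga !mxE /=; ring. Qed.
Lemma v32 : granth (Gb + Gb^T) = 0. Proof. rewrite /granth /Gb !mxE /=; ring. Qed.
Lemma v33 : granth ((Ga + Gb) + (Ga + Gb)^T) = 1. Proof. rewrite /granth /Ga /Gb !mxE /=; ring. Qed.
Lemma v34 : granth (0 + 0^T) = 0. Proof. rewrite /granth !mxE /=; ring. Qed.
Lemma v41 : husainh (Ga + Ga^T) = 0. Proof. rewrite /husainh /Ga !mxE /=; ring. Qed.
Lemma v42 : husainh (Gb + Gb^T) = 0. Proof. rewrite /husainh /Gb !mxE /=; ring. Qed.
Lemma v43 : husainh ((Ga + Gb) + (Ga + Gb)^T) = 1. Proof. rewrite /husainh /Ga /Gb !mxE /=; ring. Qed.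
Lemma v44 : husainh (0 + 0^T) = 0. Proof. rewrite /husainh !mxE /=; ring. Qed.

Lemma dP1a i : P1a i i = 0. Proof. by apply: diagD; apply: Emx_diag. Qed.
Lemma dP1b i : P1b i i = 0. Proof. by apply: diagB; [apply: diagB|]; apply: Emx_diag. Qed.
Lemma dP2a i : P2a i i = 0. Proof. by apply: diagD; apply: Emx_diag. Qed.
Lemma dP2b i : P2b i i = 0. Proof. by apply: diagB; apply: Emx_diag. Qed.
Lemma dGa i : Ga i i = 0. Proof. exact: Emx_diag. Qed.
Lemma dGb i : Gb i i = 0. Proof. exact: Emx_diag. Qed.
End Vals.

Unset Implicit Arguments.
Theorem mainTheorem6 (R : realType) (U : set 'rV[R]_4) :
  open U -> U !=set0 ->
  [/\ ~ variational_on U (@plebanski1 R),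
      ~ variational_on U (@plebanski2 R),
      ~ variational_on U (@grant R)
    & ~ variational_on U (@husain R)].
Proof.
move=> oU U0; split.
- apply: (@key2 R U _ (@pleb1h R) (P1a R) (P1b R) oU U0 (@dP1a R) (@dP1b R)).
  + move=> x; reflexivity.
  + exact: v11.
  + exact: v12.
  + left; split; first exact: v13.
    by rewrite v14 oppr_eq0 oner_eq0.
- apply: (@key2 R U _ (@pleb2h R) (P2a R) (P2b R) oU U0 (@dP2a R) (@dP2b R)).
  + move=> x; reflexivity.
  + exact: v21.
  + exact: v22.
  + right; split; last exact: v24.
    by rewrite v23 pnatr_eq0.
- apply: (@key2 R U _ (@granth R) (Ga R) (Gb R) oU U0 (@dGa R) (@dGb R)).
  + move=> x; reflexivity.
  + exact: v31.
  + exact: v32.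
  + right; split; last exact: v34.
    by rewrite v33 oner_eq0.
- apply: (@key2 R U _ (@husainh R) (Ga R) (Gb R) oU U0 (@dGa R) (@dGb R)).
  + move=> x; reflexivity.
  + exact: v41.
  + exact: v42.
  + right; split; last exact: v44.
    by rewrite v43 oner_eq0.
Qed.
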